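(* For every $n\in\mathcal{N}_{z_q}$ with $n\neq 2\lambda^2$, \[ \sup_{I\subseteq S^1}\Biggl|\frac{1}{|\Gamma_{z_q,n}|}\sum_{\gamma\in\Gamma_{z_q,n}}\mathbf{1}_{\{\theta(\gamma)\in I\}}-\frac{|I|}{2\pi}\Biggr|=\sup_{I\subseteq S^1}\Biggl|\frac{1}{|\mathcal{L}_n|}\sum_{(x,y)\in\mathcal{L}_n}\mathbf{1}_{\{\arg(x+iy)\in I\}}-\frac{|I|}{2\pi}\Biggr|, \] the suprema being over arcs $I$ of $S^1=\mathbb{R}/2\pi\mathbb{Z}$ of length $|I|$.
   Context: Let $q\in\{3,4,7,8,11,19,43,67,163\}$, $z_q=\mu+i\lambda$ with $\mu=0$ if $q\in\{4,8\}$, $\mu=1/2$ otherwise, $\lambda=\sqrt q/2$. $\mathbb{H}$ is the upper half-plane with hyperbolic distance $\rho$, $\cosh\rho(z,w)=1+\frac{|z-w|^2}{2\,\mathrm{Im}(z)\mathrm{Im}(w)}$; $\Gamma=\mathrm{PSL}(2,\mathbb{Z})$; $\mathcal{R}(\gamma;z_q)=2\lambda^2\cosh\rho(z_q,\gamma z_q)$, $\mathcal{N}_{z_q}=\{\mathcal{R}(\gamma;z_q):\gamma\in\Gamma\}$, $\Gamma_{z_q,n}=\{\gamma:\mathcal{R}(\gamma;z_q)=n\}$. For $\gamma z_q\ne z_q$, $\theta(\gamma)$ is the angle that the tangent vector at $z_q$ of the geodesic segment from $z_q$ to $\gamma z_q$ makes with the positive horizontal direction. $\mathcal{L}_n=\{(x,y)\in\mathbb{R}^2: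 x^2+y^2=n^2-4\lambda^4,\ (y-n)/(2\lambda^2)\in\mathbb{Z},\ x/\lambda\in\mathbb{Z}\}$. *)

(* Defs.v *)
From HB Require Import structures.
From mathcomp Require Import all_boot all_order all_algebra.
From mathcomp Require Import all_classical all_reals all_analysis.
Unset Printing Implicit Defensive.
Import Order.TTheory GRing.Theory Num.Theory.
Local Open Scope ring_scope.
Local Open Scope classical_set_scope.

(* points of the upper half-plane are encoded as pairs (Re z, Im z) *)

Definition q_admissible (q : nat) : bool :=
  (q \in [:: 3; 4; 7; 8; 11; 19; 43; 67; 163])%N.

Definition mu_q (R : realType) (q : nat) : R :=
  if (q \in [:: 4; 8])%N then 0 else 1 / 2.

Definition lambda_q (R : realType) (q : nat) : R := Num.sqrt (q%:R) / 2.

Definition z_q (R : realType) (q : nat) : R * R := (mu_q R q, lambda_q R q).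

(* PSL(2,Z): integer matrices (a b; c d) of determinant 1, one representative
   per class {g, -g}, normalised by c > 0, or c = 0 and d > 0. *)
Definition PSL2Z : set (int * int * int * int) :=
  [set g | let '(a, b, c, d) := g in
           a * d - b * c = 1 /\ (0 < c \/ (c = 0 /\ 0 < d))].

(* Moebius action g z = (a z + b) / (c z + d), in real coordinates *)
Definition mobius (R : realType) (g : int * int * int * int) (z : R * R) : R * R :=
  let '(a, b, c, d) := g in
  let A : R := a%:~R in let B : R := b%:~R in
  let C : R := c%:~R in let D : R := d%:~R in
  let x := z.1 in let y := z.2 in
  let den := (C * x + D) ^+ 2 + (C * y) ^+ 2 in
  (((A * x + B) * (C * x + D) + A * C * y ^+ 2) / den, y / den).

Definition cosh_rho (R : realType) (z w : R * R) : R :=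
  1 + ((z.1 - w.1) ^+ 2 + (z.2 - w.2) ^+ 2) / (2 * z.2 * w.2).

Definition Rval (R : realType) (q : nat) (g : int * int * int * int) : R :=
  2 * lambda_q R q ^+ 2 * cosh_rho R (z_q R q) (mobius R g (z_q R q)).

Definition Nset (R : realType) (q : nat) : set R := [set Rval R q g | g in PSL2Z].

Definition Gamma_n (R : realType) (q : nat) (n : R) : set (int * int * int * int) :=
  [set g | PSL2Z g /\ Rval R q g = n].

(* A vector (positively proportional to) the initial tangent vector at z of the
   hyperbolic geodesic segment from z to w (w <> z).  It is
   i (w - z) (conj w - z) = |w - conj z|^2 * i (w - z)/(w - conj z). *)
Definition tangent_dir (R : realType) (z w : R * R) : R * R :=
  (2 * z.2 * (w.1 - z.1), (w.1 - z.1) ^+ 2 + w.2 ^+ 2 - z.2 ^+ 2).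

(* theta(gamma) as a direction vector *)
Definition theta_dir (R : realType) (q : nat) (g : int * int * int * int) : R * R :=
  tangent_dir R (z_q R q) (mobius R g (z_q R q)).

(* Arcs of S^1 = R / 2piZ: image of a real interval with endpoints lo <= hi <= lo + 2pi,
   each endpoint open or closed.  Parameters (lo, hi, lo_closed, hi_closed). *)
Definition arc_param (R : realType) : set (R * R * bool * bool) :=
  [set I | I.1.1.1 <= I.1.1.2 <= I.1.1.1 + 2 * pi].

Definition arc_len (R : realType) (I : R * R * bool * bool) : R := I.1.1.2 - I.1.1.1.

Definition arc_pts (R : realType) (I : R * R * bool * bool) : set R :=
  [set t | (if I.1.2 then I.1.1.1 <= t else I.1.1.1 < t) /\
           (if I.2 then t <= I.1.1.2 else t < I.1.1.2)].

Definition arg_in (R : realType) (v : R * R) (I : R * R * bool * bool) : Prop :=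
  exists2 t, arc_pts R I t &
    v = (Num.sqrt (v.1 ^+ 2 + v.2 ^+ 2) * cos t, Num.sqrt (v.1 ^+ 2 + v.2 ^+ 2) * sin t).

Definition L_n (R : realType) (q : nat) (n : R) : set (R * R) :=
  [set p | p.1 ^+ 2 + p.2 ^+ 2 = n ^+ 2 - 4 * lambda_q R q ^+ 4 /\
           (exists k : int, (p.2 - n) / (2 * lambda_q R q ^+ 2) = k%:~R) /\
           (exists k : int, p.1 / lambda_q R q = k%:~R)].

Definition disc_Gamma (R : realType) (q : nat) (n : R) (I : R * R * bool * bool) : R :=
  `| (\sum_(g \in Gamma_n R q n) ((`[< arg_in R (theta_dir R q g) I >])%:R : R))
       / (\sum_(g \in Gamma_n R q n) (1 : R))
     - arc_len R I / (2 * pi) |.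

Definition disc_L (R : realType) (q : nat) (n : R) (I : R * R * bool * bool) : R :=
  `| (\sum_(p \in L_n R q n) ((`[< arg_in R p I >])%:R : R))
       / (\sum_(p \in L_n R q n) (1 : R))
     - arc_len R I / (2 * pi) |.

(* Main.v *)
Require Import Defs.
From HB Require Import structures.
From mathcomp Require Import all_boot all_order all_algebra.
From mathcomp Require Import all_classical all_reals all_analysis.
From mathcomp Require Import zify ring lra.
Import Order.TTheory GRing.Theory Num.Theory.
Local Open Scope ring_scope.
Local Open Scope classical_set_scope.
Set Implicit Arguments. Unset Strict Implicit.

Lemma qcases (P : nat -> Prop) q : q_admissible q ->
  P 3%N -> P 4%N -> P 7%N -> P 8%N -> P 11%N -> P 19%N -> P 43%N -> P 67%N -> P 163%N -> P q.
Proof.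
rewrite /q_admissible !inE => hq h3 h4 h7 h8 h11 h19 h43 h67 h163.
by repeat (case/orP: hq => [/eqP -> //|hq]); move/eqP: hq => ->.
Qed.

Definition B0 (q : nat) : int := if (q \in [:: 4; 8])%N then 0 else -1.
Definition C0 (q : nat) : int :=
  if (q \in [:: 4; 8])%N then (q %/ 4)%N%:Z else (q.+1 %/ 4)%N%:Z.

Lemma B0C0 q : q_admissible q -> 4 * C0 q - B0 q ^+ 2 = q%:Z.
Proof. by move=> hq; pattern q; apply: (@qcases _ _ hq). Qed.

Definition quad := (int * int * int * int)%type.
Definition det (g : quad) : int := let '(a, b, c, d) := g in a * d - b * c.
Definition fA q (g : quad) : int := let '(a, b, c, d) := g in c * c * C0 q - c * d * B0 q + d * d.
Definition fB q (g : quad) : int := let '(a, b, c, d) := g in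
  - 2 * a * c * C0 q - 2 * b * d + (a * d + b * c) * B0 q.
Definition fC q (g : quad) : int := let '(a, b, c, d) := g in a * a * C0 q - a * b * B0 q + b * b.

Lemma disc_id q g : fB q g ^+ 2 - 4 * fA q g * fC q g = - (4 * C0 q - B0 q ^+ 2) * det g ^+ 2.
Proof. by case: g => [[[a b] c d]] /=; ring. Qed.

Lemma reduced_one q (A B C : int) : q_admissible q -> 0 < A -> `|B| <= A -> A <= C ->
  B ^+ 2 - 4 * A * C = - q%:Z -> A = 1.
Proof.
move=> hq hA hB hAC hd.
have hB2 : B ^+ 2 <= A ^+ 2 by rewrite -real_normK ?num_real // lerXn2r // ?nnegrE ?normr_ge0 // ltW.
have h3 : 3 * A ^+ 2 <= q%:Z by nia.
have hq163 : (q <= 163)%N by pattern q; apply: (@qcases _ _ hq).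
have hA7 : A <= 7 by nia.
have hB7 : `|B| <= 7 by lia.
move: hd h3; apply: (@qcases (fun q => B ^+ 2 - 4 * A * C = - q%:Z -> 3 * A ^+ 2 <= q%:Z -> A = 1) _ hq) => hd h3;
  (have : A = 1 \/ A = 2 \/ A = 3 \/ A = 4 \/ A = 5 \/ A = 6 \/ A = 7 by lia);
  (have : B = -7 \/ B = -6 \/ B = -5 \/ B = -4 \/ B = -3 \/ B = -2 \/ B = -1 \/ B = 0 \/ B = 1 \/ B = 2 \/ B = 3 \/ B = 4 \/ B = 5 \/ B = 6 \/ B = 7 by lia);
  move=> hBc hAc; repeat (case: hBc => [->|hBc]); first [subst B|idtac];
  move: hd; rewrite ?expr2 => hd; lia.
Qed.



Lemma B0_cases q : q_admissible q ->
  (B0 q = 0 /\ exists k : int, q%:Z = 4 * k) \/ (B0 q = -1 /\ exists k : int, q%:Z = 4 * k + 3).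
Proof.
move=> hq; pattern q; apply: (@qcases _ _ hq);
  [right; split=> //; exists 0|left; split=> //; exists 1|right; split=> //; exists 1
  |left; split=> //; exists 2|right; split=> //; exists 2|right; split=> //; exists 4
  |right; split=> //; exists 10|right; split=> //; exists 16|right; split=> //; exists 40]; by [].
Qed.

Lemma reach_aux q : q_admissible q -> forall (N M : nat) (A B C : int),
  (absz A <= N)%N -> (absz B <= M)%N -> 0 < A -> B ^+ 2 - 4 * A * C = - q%:Z ->
  exists g : quad, det g = 1 /\ fA q g = A /\ fB q g = B.
Proof.
move=> hq; have hd := B0C0 hq; have hdi := disc_id q.
elim=> [|N IHN] M A B C hAN hBM hA hd0; first by lia.
have fin : forall A B C : int, (absz A <= N.+1)%N -> 0 < A -> `|B| <= A ->
    B ^+ 2 - 4 * A * C = - q%:Z -> exists g : quad, det g = 1 /\ fA q g = A /\ fB q g = B.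
  clear hAN hBM hA hd0.
  move=> {}A {}B {}C hAN' hA' hB' hd'.
  have [hAC|hCA] := lerP A C.
    have A1 := reduced_one hq hA' hB' hAC hd'.
    subst A.
    case: (B0_cases hq) => [[hB0 [k hk]]|[hB0 [k hk]]].
    - have -> : B = 0.
        have : B = -1 \/ B = 0 \/ B = 1 by lia.
        by case=> [hB|[->//|hB]]; move: hd'; rewrite hB => hd'; lia.
      by exists (1, 0, 0, 1); rewrite /det /fA /fB hB0 /=; (repeat split); ring.
    - have : B = -1 \/ B = 0 \/ B = 1 by lia.
      case=> [->|[hB|->]].
      + by exists (1, 0, 0, 1); rewrite /det /fA /fB hB0 /=; (repeat split); ring.
      + by move: hd'; rewrite hB => hd'; lia.
      + by exists (1, -1, 0, 1); rewrite /det /fA /fB hB0 /=; (repeat split); ring.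
  have hq0 : (0 < q)%N by pattern q; apply: (@qcases _ _ hq).
  have hB2 : 0 <= B ^+ 2 by apply: sqr_ge0.
  have hC : 0 < C by nia.
  have [[[[a b] c d] [h1 [h2 h3]]]] : exists g : quad, det g = 1 /\ fA q g = C /\ fB q g = - B.
    apply: (IHN `|B|%N C (- B) A) => //; try lia.
  have h4 : fC q (a, b, c, d) = A.
    have := hdi (a, b, c, d); rewrite h1 h2 h3 hd => e.
    have : 4 * C * (fC q (a, b, c, d) - A) = 0 by rewrite mulrBr; lia.
    by move/eqP; rewrite !mulf_eq0 subr_eq0 => /orP[/orP[|]|/eqP] //; lia.
  exists (c, d, -a, -b); split; [|split].
  - by rewrite -h1 /det /=; ring.
  - by rewrite -h4 /fA /fC /=; ring.
  - by rewrite -[B]opprK -h3 /fB /=; ring.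
have [hB|hB] := lerP `|B| A; first by apply: (fin A B C) => //; lia.
elim: M B C hBM hB hd0 => [|M IHM] B C hBM hB hd0; first by lia.
have [hBp|hBn] := lerP 0 B.
- have [[[[a b] c d] [h1 [h2 h3]]]] : exists g : quad, det g = 1 /\ fA q g = A /\ fB q g = B - 2 * A.
    have [hB'|hB'] := lerP `|B - 2 * A| A.
      by apply: (fin A (B - 2 * A) (C - B + A)) => //; lia.
    by apply: (IHM (B - 2 * A) (C - B + A)) => //; lia.
  exists (a - c, b - d, c, d); split; [|split].
  - by rewrite -h1 /det /=; ring.
  - by rewrite -h2 /fA /=; ring.
  - by rewrite -[B](subrK (2 * A)) -h3 -h2 /fA /fB /=; ring.
- have [[[[a b] c d] [h1 [h2 h3]]]] : exists g : quad, det g = 1 /\ fA q g = A /\ fB q g = B + 2 * A.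
    have [hB'|hB'] := lerP `|B + 2 * A| A.
      by apply: (fin A (B + 2 * A) (C + B + A)) => //; lia.
    by apply: (IHM (B + 2 * A) (C + B + A)) => //; lia.
  exists (a + c, b + d, c, d); split; [|split].
  - by rewrite -h1 /det /=; ring.
  - by rewrite -h2 /fA /=; ring.
  - by rewrite -[B](addrK (2 * A)) -h3 -h2 /fA /fB /=; ring.
Qed.

Lemma reach q (A B C : int) : q_admissible q -> 0 < A -> B ^+ 2 - 4 * A * C = - q%:Z ->
  exists g : quad, det g = 1 /\ fA q g = A /\ fB q g = B.
Proof. by move=> hq; apply: (reach_aux hq (leqnn _) (leqnn _)). Qed.



Lemma qfacts (R : realType) q : q_admissible q ->
  [/\ 0 < lambda_q R q, lambda_q R q ^+ 2 = q%:R / 4,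
      (B0 q)%:~R = - 2 * mu_q R q :> R & (C0 q)%:~R = mu_q R q ^+ 2 + lambda_q R q ^+ 2 :> R].
Proof.
move=> hq.
have hq0 : (0 < q)%N by pattern q; apply: (@qcases _ _ hq).
have hl2 : lambda_q R q ^+ 2 = q%:R / 4.
  by rewrite /lambda_q expr_div_n sqr_sqrtr ?ler0n //; congr (_ / _); rewrite expr2; lra.
have hB : (B0 q)%:~R = - 2 * mu_q R q :> R.
  by rewrite /B0 /mu_q; case: ifP => _ /=; lra.
split => //.
- by rewrite /lambda_q divr_gt0 // sqrtr_gt0 ltr0n.
- have := congr1 (fun z : int => z%:~R : R) (B0C0 hq).
  rewrite /= intrB intrM rmorphXn /= hB hl2 => e.
  move: e; rewrite (_ : (q%:Z)%:~R = q%:R :> R) //; lra.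
Qed.

Lemma key_R (F : realFieldType) (a b c d m l : F) : l != 0 -> a * d - b * c = 1 ->
  (c * m + d) ^+ 2 + (c * l) ^+ 2 != 0 ->
  let den : F := (c * m + d) ^+ 2 + (c * l) ^+ 2 in
  let u : F := ((a * m + b) * (c * m + d) + a * c * l ^+ 2) / den in
  let v : F := l / den in
  let Cr : F := a * a * (m ^+ 2 + l ^+ 2) - a * b * (-2 * m) + b * b in
  let Br : F := - 2 * a * c * (m ^+ 2 + l ^+ 2) - 2 * b * d + (a * d + b * c) * (-2 * m) in
  2 * l ^+ 2 * (1 + ((m - u) ^+ 2 + (l - v) ^+ 2) / (2 * l * v)) =
    Cr + Br * m + den * (m ^+ 2 + l ^+ 2) /\
  den * (2 * l * (u - m)) = l * (den * (-2 * m) - Br) /\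
  den * ((u - m) ^+ 2 + v ^+ 2 - l ^+ 2) = (Cr + Br * m + den * (m ^+ 2 + l ^+ 2)) - 2 * l ^+ 2 * den.
Proof.
move=> hl hdet hden den u v Cr Br.
have hv : v = l * (a * d - b * c) / den by rewrite hdet mulr1.
have hdet0 : a * d - b * c != 0 by rewrite hdet oner_eq0.
rewrite hv /u /Cr /Br /den; clear hv Br Cr v u den; split; [|split].
- rewrite -[RHS]divr1 -[in X in _ = _ / X]hdet.
  by field; rewrite ?hl ?hden ?hdet0.
- by field; rewrite ?hl ?hden ?hdet0.
- by field; rewrite ?hl ?hden ?hdet0.
Qed.



Definition nval (R : realType) q g : R :=
  (fC q g)%:~R + (fB q g)%:~R * mu_q R q + (fA q g)%:~R * (C0 q)%:~R.
Definition Phi (R : realType) q (n : R) g : R * R :=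
  (lambda_q R q * (fA q g * B0 q - fB q g)%:~R, n - 2 * lambda_q R q ^+ 2 * (fA q g)%:~R).

Arguments Phi : clear implicits.
Arguments nval : clear implicits.

Lemma fA4 q g : q_admissible q -> 4 * fA q g = (2 * g.2 - g.1.2 * B0 q) ^+ 2 + q%:Z * g.1.2 ^+ 2.
Proof. by move=> hq; rewrite -(B0C0 hq); case: g => [[[a b] c d]] /=; ring. Qed.

Lemma fA_pos q g : q_admissible q -> det g = 1 -> 0 < fA q g.
Proof.
move=> hq; have := fA4 g hq; case: g => [[[a b] c d]] /= h4 hdet.
have hq0 : (0 < q)%N by pattern q; apply: (@qcases _ _ hq).
have [hc0|hc] := eqVneq c 0.
  subst c.
  have hd : d != 0 by apply/eqP => hd; move: hdet; rewrite /det hd; lia.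
  have h4' : 4 * fA q (a, b, 0, d) = (2 * d) ^+ 2 by rewrite h4; ring.
  have : 0 < (2 * d) ^+ 2 by rewrite exprn_even_gt0 //= mulf_neq0.
  lia.
have : 0 < c ^+ 2 by rewrite exprn_even_gt0 //= hc.
have : 0 <= (2 * d - c * B0 q) ^+ 2 by apply: sqr_ge0.
nia.
Qed.

Lemma den_fA (R : realType) q (a b c d : int) : q_admissible q ->
  (fA q (a, b, c, d))%:~R = (c%:~R * mu_q R q + d%:~R) ^+ 2 + (c%:~R * lambda_q R q) ^+ 2 :> R.
Proof.
move=> hq; have [_ _ hB hC] := qfacts R hq.
by rewrite /fA !(intrD, intrB, intrM, intrN) hB hC; ring.
Qed.

Lemma Rval_nval (R : realType) q g : q_admissible q -> det g = 1 -> Rval R q g = nval R q g.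
Proof.
move=> hq hdet; have hA := fA_pos hq hdet.
have [hl _ hB hC] := qfacts R hq.
move: hdet hA; case: g => [[[a b] c d]] hdet hA.
have hden := @den_fA R q a b c d hq.
have hdetR : a%:~R * d%:~R - b%:~R * c%:~R = 1 :> R.
  by move: hdet; rewrite /det => /(congr1 (fun z : int => z%:~R : R)); rewrite intrB !intrM.
have hden0 : (c%:~R * mu_q R q + d%:~R) ^+ 2 + (c%:~R * lambda_q R q) ^+ 2 != 0 :> R.
  by rewrite -(@den_fA R q a b c d hq) gt_eqF // ltr0z.
have [e1 _] := key_R (lt0r_neq0 hl) hdetR hden0.
rewrite /Rval /cosh_rho /mobius /z_q /= e1 /nval hden.
by rewrite /fB /fC !(intrD, intrB, intrM, intrN) hB hC; ring.
Qed.

Lemma disc_q q g : q_admissible q -> det g = 1 -> fB q g ^+ 2 - 4 * fA q g * fC q g = - q%:Z.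
Proof. by move=> hq hdet; rewrite disc_id hdet (B0C0 hq); ring. Qed.

Lemma disc_qR (R : realType) q g : q_admissible q -> det g = 1 ->
  (fB q g)%:~R ^+ 2 - 4 * (fA q g)%:~R * (fC q g)%:~R = - 4 * lambda_q R q ^+ 2 :> R.
Proof.
move=> hq hdet; have [_ hl2 _ _] := qfacts R hq.
have := congr1 (fun z : int => z%:~R : R) (disc_q hq hdet).
rewrite /= expr2 !(intrB, intrM, intrN) => e.
rewrite expr2 e hl2 (_ : (q%:Z)%:~R = q%:R :> R) //; lra.
Qed.

Lemma theta_Phi (R : realType) q g : q_admissible q -> det g = 1 ->
  Phi R q (nval R q g) g = ((fA q g)%:~R * (theta_dir R q g).1, (fA q g)%:~R * (theta_dir R q g).2).
Proof.
move=> hq hdet; have hA := fA_pos hq hdet.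
have [hl _ hB hC] := qfacts R hq.
move: hdet hA; case: g => [[[a b] c d]] hdet hA.
have hden := @den_fA R q a b c d hq.
have hdetR : a%:~R * d%:~R - b%:~R * c%:~R = 1 :> R.
  by move: hdet; rewrite /det => /(congr1 (fun z : int => z%:~R : R)); rewrite intrB !intrM.
have hden0 : (c%:~R * mu_q R q + d%:~R) ^+ 2 + (c%:~R * lambda_q R q) ^+ 2 != 0 :> R.
  by rewrite -(@den_fA R q a b c d hq) gt_eqF // ltr0z.
have [_ [e2 e3]] := key_R (lt0r_neq0 hl) hdetR hden0.
rewrite /theta_dir /tangent_dir /mobius /z_q /= hden e2 e3 /Phi /nval hden.
congr (_, _).
  by rewrite /fB !(intrD, intrB, intrM, intrN) hB hC; ring.
by rewrite /fB /fC !(intrD, intrB, intrM, intrN) hB hC; ring.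
Qed.

Lemma Phi_in_L (R : realType) q g : q_admissible q -> det g = 1 ->
  L_n R q (nval R q g) (Phi R q (nval R q g) g).
Proof.
move=> hq hdet; have hA := fA_pos hq hdet.
have [hl hl2 hB hC] := qfacts R hq.
have hd := disc_qR R hq hdet.
rewrite /L_n /Phi /nval /=.
have hl0 : lambda_q R q != 0 by rewrite gt_eqF.
have hA0 : (fA q g)%:~R != 0 :> R by rewrite gt_eqF // ltr0z.
split; [|split].
- have hCr : (fC q g)%:~R = ((fB q g)%:~R ^+ 2 + 4 * lambda_q R q ^+ 2) / (4 * (fA q g)%:~R) :> R.
    have -> : (fB q g)%:~R ^+ 2 + 4 * lambda_q R q ^+ 2 = 4 * (fA q g)%:~R * (fC q g)%:~R :> R by lra.
    by field; rewrite ?hA0.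
  by rewrite hCr intrB intrM hC hB; field; rewrite ?hA0.
- by exists (- fA q g); rewrite intrN; field; rewrite hl0.
- by exists (fA q g * B0 q - fB q g); field.
Qed.

Definition negq (g : quad) : quad := let '(a, b, c, d) := g in (-a, -b, -c, -d).
Definition psln (g : quad) : quad :=
  let '(a, b, c, d) := g in if (0 < c) || ((c == 0) && (0 < d)) then g else negq g.

Lemma negq_f q g : [/\ fA q (negq g) = fA q g, fB q (negq g) = fB q g,
  fC q (negq g) = fC q g & det (negq g) = det g].
Proof. by case: g => [[[a b] c d]] /=; split; ring. Qed.

Lemma psln_cases g : psln g = g \/ psln g = negq g.
Proof. by case: g => [[[a b] c d]] /=; case: ifP; [left|right]. Qed.

Lemma psln_f q g : [/\ fA q (psln g) = fA q g, fB q (psln g) = fB q g,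
  fC q (psln g) = fC q g & det (psln g) = det g].
Proof. by case: (psln_cases g) => ->; [|exact: negq_f]. Qed.

Lemma psln_PSL g : det g = 1 -> PSL2Z (psln g).
Proof.
case: g => [[[a b] c d]] /= hdet; case: ifP => h /=.
  by split=> //; case/orP: h => [h|/andP[/eqP -> h]]; [left|right].
split; first by rewrite -hdet /det; ring.
move/negbT: h; rewrite negb_or negb_and -leNgt -leNgt => /andP[hc hcd].
have [c0|cn] := eqVneq c 0.
  subst c; move: hcd; rewrite eqxx /= => hd.
  have : d != 0 by apply/eqP => hd0; move: hdet; rewrite /det hd0; lia.
  by move=> hd0; right; split; lia.
by left; lia.
Qed.

Lemma psln_id g : PSL2Z g -> psln g = g.
Proof.
case: g => [[[a b] c d]] /= [_ h]; case: ifP => // /negbT.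
by rewrite negb_or negb_and -!leNgt; case: h => [h|[-> h]]; lia.
Qed.

Lemma psln_neg g : PSL2Z g -> psln (negq g) = g.
Proof.
case: g => [[[a b] c d]] /= [_ h]; rewrite !oppr_gt0 oppr_eq0; case: ifP.
  by case: h => [h|[-> h]]; lia.
by move=> _; rewrite !opprK.
Qed.



Lemma PSL_det g : PSL2Z g -> det g = 1.
Proof. by case: g => [[[a b] c d]] [h _]. Qed.

Lemma intrX2 (R : pzRingType) (z : int) : (z ^+ 2)%:~R = z%:~R ^+ 2 :> R.
Proof. by rewrite !expr2 intrM. Qed.

Lemma parity (B : int) : exists s r : int, B = 2 * s + r /\ (r = 0 \/ r = 1).
Proof. exists (B %/ 2)%Z, (B %% 2)%Z; split; lia. Qed.

Lemma surjL (R : realType) q (n : R) p : q_admissible q -> Nset R q n -> L_n R q n p ->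
  exists g, PSL2Z g /\ Rval R q g = n /\ Phi R q n g = p.
Proof.
move=> hq [g1 hg1 hn] [hp [[k1 hk1] [k2 hk2]]].
have hdet1 := PSL_det hg1.
have [hl hl2 hB hC] := qfacts R hq.
rewrite (Rval_nval R hq hdet1) /nval in hn.
have hA1 := fA_pos hq hdet1.
have hd1 := disc_q hq hdet1.
have hd1R := disc_qR R hq hdet1.
move: hn hA1 hd1 hd1R.
set A1 := fA q g1; set B1 := fB q g1; set C1 := fC q g1 => hn hA1 hd1 hd1R.
have hl0 : lambda_q R q != 0 by rewrite gt_eqF.
have hl20 : lambda_q R q ^+ 2 != 0 by rewrite expf_neq0.
case: p hp hk1 hk2 => x y /= hp hk1 hk2.
have hy : y = n + 2 * lambda_q R q ^+ 2 * k1%:~R by rewrite -hk1; field; rewrite hl0.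
have hx : x = lambda_q R q * k2%:~R by rewrite -hk2; field.
have hA1R : 0 < A1%:~R :> R by rewrite ltr0z.
have hnpos : 0 < n.
  have h4 : 4 * A1%:~R * n = (B1%:~R + 2 * mu_q R q * A1%:~R) ^+ 2
      + 4 * lambda_q R q ^+ 2 * (1 + A1%:~R ^+ 2) :> R.
    by rewrite -hn hC; lra.
  have : 0 < 4 * A1%:~R * n :> R.
    rewrite h4; apply: ltr_wpDl; first exact: sqr_ge0.
    by apply: mulr_gt0; [apply: mulr_gt0 => //; apply: exprn_gt0|]; nra.
  by rewrite -mulrA pmulr_rgt0 // pmulr_rgt0.
have hk : k2%:~R ^+ 2 + 4 * n * k1%:~R + 4 * lambda_q R q ^+ 2 * k1%:~R ^+ 2
    + 4 * lambda_q R q ^+ 2 = 0 :> R.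
  have : lambda_q R q ^+ 2 * (k2%:~R ^+ 2 + 4 * n * k1%:~R + 4 * lambda_q R q ^+ 2 * k1%:~R ^+ 2
    + 4 * lambda_q R q ^+ 2) = 0 :> R.
    by move: hp; rewrite hx hy; lra.
  by move/eqP; rewrite mulf_eq0 (negbTE hl20) /= => /eqP.
have hk1n : k1 < 0.
  rewrite -(ltrz0 R); rewrite ltNge; apply/negP => hk10.
  have : 0 <= n * k1%:~R by apply: mulr_ge0 => //; exact: ltW.
  have : 0 <= k2%:~R ^+ 2 :> R by apply: sqr_ge0.
  have : 0 <= lambda_q R q ^+ 2 * k1%:~R ^+ 2 :> R by apply: mulr_ge0; apply: sqr_ge0.
  have : 0 < lambda_q R q ^+ 2 by apply: exprn_gt0.
  lra.
have [A eA] : {A : int | A = - k1} by exists (- k1).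
have [B eB] : {B : int | B = A * B0 q - k2} by exists (A * B0 q - k2).
have hAp : 0 < A by rewrite eA; lia.
have [Cr eCr] : {Cr : R | Cr = n - B%:~R * mu_q R q - A%:~R * (C0 q)%:~R} by eexists.
have hE : 4 * A%:~R * Cr = B%:~R ^+ 2 + 4 * lambda_q R q ^+ 2 :> R.
  rewrite eCr eB eA !(intrB, intrM, intrN) hB hC; move: hk; lra.
have hq4 : (q%:Z)%:~R = 4 * lambda_q R q ^+ 2 :> R by rewrite hl2 (_ : (q%:Z)%:~R = q%:R :> R) //; lra.
have e4 : (4%:~R : R) = 4 by [].
have e2 : (2%:~R : R) = 2 by [].
have [Cz [hCz hCzE]] : exists Cz : int, Cr = Cz%:~R /\ 4 * A * Cz = B ^+ 2 + q%:Z.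
  suff [Cz hCz] : exists Cz : int, Cr = Cz%:~R.
    exists Cz; split => //; apply: (@intr_inj R).
    by rewrite (intrD _ (B ^+ 2)) !intrM -hCz e4 hE hq4 expr2.
  case: (B0_cases hq) => [[hB00 _]|[hB01 [kq hkq]]].
  - have hmu : mu_q R q = 0 by move: hB; rewrite hB00 /=; lra.
    exists (C1 + A1 * C0 q - A * C0 q).
    by rewrite eCr -hn hmu (intrB _ (C1 + _)) (intrD _ C1) !intrM; ring.
  - have hmu : mu_q R q = 1 / 2 by move: hB; rewrite hB01 /=; lra.
    have [s1 [r1 [hB1 hr1]]] := parity B1.
    have [s [r [hBs hr]]] := parity B.
    have hEi : 4 * A * (C1 + A1 * C0 q - A * C0 q) + 2 * A * (B1 - B) = B ^+ 2 + q%:Z.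
      apply: (@intr_inj R).
      rewrite (intrD _ (B ^+ 2)) intrX2 hq4 -hE.
      rewrite (intrD _ (4 * A * _)) !intrM (intrB _ (C1 + _)) (intrD _ C1) (intrB _ B1) !intrM e4 e2.
      by rewrite eCr -hn hmu; field.
    have hr1' : r1 = 1 by case: hr1 => // hr10; move: hd1; rewrite hB1 hr10; lia.
    have hr' : r = 1 by case: hr => // hr0; move: hEi; rewrite hBs hr0; lia.
    exists (C1 + A1 * C0 q - A * C0 q + (s1 - s)).
    rewrite eCr -hn hmu hB1 hBs hr1' hr'.
    rewrite (intrD _ (C1 + _ - _)) (intrB _ (C1 + _)) (intrD _ C1) (intrB _ s1) !intrM.
    by rewrite (intrD _ (2 * s1)) (intrD _ (2 * s)) !intrM e2 (_ : (1%:~R : R) = 1) //; field.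
have hdz : B ^+ 2 - 4 * A * Cz = - q%:Z by lia.
have [g0 [hdet0 [hfA0 hfB0]]] := @reach q A B Cz hq hAp hdz.
have [nA nB nC ndet] := psln_f q g0.
have hdetn : det (psln g0) = 1 by rewrite ndet.
exists (psln g0); split; first exact: psln_PSL hdet0.
have hfC : fC q (psln g0) = Cz.
  have := disc_q hq hdetn; rewrite nA nB hfA0 hfB0 => hd0.
  have hA4 : 4 * A != 0 by rewrite mulf_neq0 // gt_eqF.
  apply: (mulfI hA4); lia.
split.
- rewrite (Rval_nval R hq hdetn) /nval nA nB hfC hfA0 hfB0 -hCz eCr; ring.
- rewrite /Phi nA nB hfA0 hfB0 hx hy.
  have -> : A * B0 q - B = k2 by rewrite eB; ring.
  by rewrite eA intrN; congr (_, _); ring.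
Qed.


Definition qmul (g h : quad) : quad :=
  let '(a, b, c, d) := g in let '(a', b', c', d') := h in
  (a * a' + b * c', a * b' + b * d', c * a' + d * c', c * b' + d * d').
Definition adjq (g : quad) : quad := let '(a, b, c, d) := g in (d, - b, - c, a).
Definition Fq q (g : quad) : int * int * int := (fA q g, fB q g, fC q g).
Definition act (F : int * int * int) (g : quad) : int * int * int :=
  let '(A, B, C) := F in let '(a, b, c, d) := g in
  (A * d * d - B * d * c + C * c * c, - 2 * A * b * d + B * (a * d + b * c) - 2 * C * a * c,
   A * b * b - B * a * b + C * a * a).
Definition fz q : int * int * int := (1, B0 q, C0 q).

Lemma Fq_mul q g h : Fq q (qmul g h) = act (Fq q h) g.
Proof. by case: g => [[[a b] c d]]; case: h => [[[a' b'] c' d']]; rewrite /Fq /act /fA /fB /fC /qmul /=; congr (_, _, _); ring. Qed.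

Lemma Fq_fz q g : Fq q g = act (fz q) g.
Proof. by case: g => [[[a b] c d]]; rewrite /Fq /act /fz /fA /fB /fC /=; congr (_, _, _); ring. Qed.

Lemma act_adj F r : det r = 1 -> act (act F r) (adjq r) = F.
Proof.
case: F => [[A B] C]; case: r => [[[a b] c d]] /= hd.
have e : forall x : int, x = x * (a * d - b * c) ^+ 2 by move=> x; rewrite hd expr1n mulr1.
by congr (_, _, _); [rewrite [A in RHS]e|rewrite [B in RHS]e|rewrite [C in RHS]e]; ring.
Qed.

Lemma det_mul g h : det (qmul g h) = det g * det h.
Proof. by case: g => [[[a b] c d]]; case: h => [[[a' b'] c' d']] /=; ring. Qed.

Lemma det_adj g : det (adjq g) = det g.
Proof. by case: g => [[[a b] c d]] /=; ring. Qed.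

Lemma adj_mul r g : det r = 1 -> qmul (adjq r) (qmul r g) = g.
Proof.
case: r => [[[a b] c d]]; case: g => [[[a' b'] c' d']] /= hd.
have e : forall x : int, x = x * (a * d - b * c) by move=> x; rewrite hd mulr1.
by congr (_, _, _, _); [rewrite [a' in RHS]e|rewrite [b' in RHS]e|rewrite [c' in RHS]e|rewrite [d' in RHS]e]; ring.
Qed.

Lemma mul_adj r g : det r = 1 -> qmul r (qmul (adjq r) g) = g.
Proof.
case: r => [[[a b] c d]]; case: g => [[[a' b'] c' d']] /= hd.
have e : forall x : int, x = x * (a * d - b * c) by move=> x; rewrite hd mulr1.
by congr (_, _, _, _); [rewrite [a' in RHS]e|rewrite [b' in RHS]e|rewrite [c' in RHS]e|rewrite [d' in RHS]e]; ring.
Qed.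

Lemma mul_neg g h : qmul g (negq h) = negq (qmul g h).
Proof. by case: g => [[[a b] c d]]; case: h => [[[a' b'] c' d']] /=; congr (_, _, _, _); ring. Qed.

Lemma negqK g : negq (negq g) = g.
Proof. by case: g => [[[a b] c d]] /=; rewrite !opprK. Qed.

Lemma Fq_psln q g : Fq q (psln g) = Fq q g.
Proof. by have [hA hB hC _] := psln_f q g; rewrite /Fq hA hB hC. Qed.

Lemma PSL_negq g : PSL2Z g -> PSL2Z (negq g) -> False.
Proof. by case: g => [[[a b] c d]] /= [_ h] [_ h']; lia. Qed.



Definition ball (M : nat) : set int := [set z | `|z| <= M%:Z].

Lemma finite_ball M : finite_set (ball M).
Proof.
apply: (sub_finite_set _ (finite_seq [seq (i%:Z - M%:Z) | i <- iota 0 (2 * M).+1])).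
move=> z hz; have : z \in [seq (i%:Z - M%:Z) | i <- iota 0 (2 * M).+1]; last by [].
rewrite /ball /= in hz; apply/mapP; exists (absz (z + M%:Z)).
  by rewrite mem_iota; lia.
lia.
Qed.

Lemma int_abs_le_sq (x : int) : `|x| <= x ^+ 2.
Proof.
have : x = 0 \/ 1 <= x \/ x <= -1 by lia.
case=> [->|[h|h]]; first by [].
  have : 0 <= x * (x - 1) by apply: mulr_ge0; lia.
  rewrite expr2; lia.
have : 0 <= (- x) * (- x - 1) by apply: mulr_ge0; lia.
rewrite expr2; lia.
Qed.

Definition Kset q : set quad := [set h | PSL2Z h /\ fA q h = 1 /\ fB q h = B0 q].

Lemma finite_K q : q_admissible q -> finite_set (Kset q).
Proof.
move=> hq.
have hq0 : (3 <= q <= 163)%N by pattern q; apply: (@qcases _ _ hq).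
have hB0 : B0 q = 0 \/ B0 q = -1 by case: (B0_cases hq) => [[-> _]|[-> _]]; [left|right].
have hC0 : 4 * C0 q = q%:Z + B0 q ^+ 2 by rewrite -(B0C0 hq); ring.
pose M := 1000%N.
apply: (sub_finite_set _ (finite_setX (finite_setX (finite_setX (finite_ball M) (finite_ball M))
   (finite_ball M)) (finite_ball M))).
case=> [[[a b] c d]] [hP [hA hB]].
have hdet := PSL_det hP.
have hC : fC q (a, b, c, d) = C0 q.
  have := disc_q hq hdet; rewrite hA hB => e.
  by move: e; rewrite -(B0C0 hq); lia.
have e1 : 4 * fA q (a, b, c, d) = (2 * d - c * B0 q) ^+ 2 + q%:Z * c ^+ 2.
  by rewrite /fA -(B0C0 hq); ring.
have e2 : 4 * fC q (a, b, c, d) = (2 * b - a * B0 q) ^+ 2 + q%:Z * a ^+ 2.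
  by rewrite /fC -(B0C0 hq); ring.
have s1 := int_abs_le_sq (2 * d - c * B0 q).
have s2 := int_abs_le_sq c.
have s3 := int_abs_le_sq (2 * b - a * B0 q).
have s4 := int_abs_le_sq a.
have c2 : 0 <= c ^+ 2 by apply: sqr_ge0.
have a2 : 0 <= a ^+ 2 by apply: sqr_ge0.
have d2 : 0 <= (2 * d - c * B0 q) ^+ 2 by apply: sqr_ge0.
have b2 : 0 <= (2 * b - a * B0 q) ^+ 2 by apply: sqr_ge0.
have hC0b : C0 q <= 41 by move: hC0; case: hB0 => ->; lia.
rewrite /ball /=; move: e1 e2; rewrite hA hC => e1 e2.
have hq1 : 1 <= q%:Z by lia.
have hqc : c ^+ 2 <= q%:Z * c ^+ 2 := ler_peMl c2 hq1.
have hqa : a ^+ 2 <= q%:Z * a ^+ 2 := ler_peMl a2 hq1.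
have hc : `|c| <= 4 by clear -e1 d2 hqc s2 c2; lia.
have ha : `|a| <= 164 by clear -e2 b2 hqa s4 a2 hC0b; lia.
have hd : `|2 * d - c * B0 q| <= 4 by clear -e1 s1 c2 hq1 hqc; lia.
have hb : `|2 * b - a * B0 q| <= 164 by clear -e2 s3 a2 hqa hC0b; lia.
clear -hB0 hc ha hd hb.
by case: hB0 => hB0; rewrite hB0 in hd hb; do !split; lia.
Qed.

Lemma int_lt_bound (R : realType) (k : int) (M : nat) (B : R) :
  k%:~R ^+ 2 <= B -> B < M%:R -> k \in ball M.
Proof.
move=> h1 h2; have h3 : ((k ^+ 2)%:~R : R) < (M%:Z)%:~R.
  by rewrite intrX2; apply: le_lt_trans h2.
rewrite ltr_int in h3; have := int_abs_le_sq k; rewrite inE /ball /=; lia.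
Qed.

Lemma finite_L (R : realType) q (n : R) : q_admissible q -> finite_set (L_n R q n).
Proof.
move=> hq; have [hl hl2 _ _] := qfacts R hq.
rewrite /L_n; move: (lambda_q R q) hl hl2 => l hl hl2.
have hl2p : 0 < l ^+ 2 by apply: exprn_gt0.
have hl4p : 0 < l ^+ 4 by apply: exprn_gt0.
pose Bd := n ^+ 2 / l ^+ 2 + n ^+ 2 / l ^+ 4.
have hBd0 : 0 <= Bd by rewrite /Bd addr_ge0 // divr_ge0 // ?sqr_ge0 // ltW.
pose M := Num.bound Bd.
have hM : Bd < M%:R by apply: archi_boundP.
apply: (sub_finite_set _ (finite_image (fun ij : int * int => (l * ij.1%:~R, n + 2 * l ^+ 2 * ij.2%:~R))
   (finite_setX (finite_ball M) (finite_ball M)))).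
case=> x y [/= hp [[k1 hk1] [k2 hk2]]].
have hl0 : l != 0 by rewrite gt_eqF.
have hy : y = n + 2 * l ^+ 2 * k1%:~R by rewrite -hk1; field; rewrite hl0.
have hx : x = l * k2%:~R by rewrite -hk2; field.
have hy2 : 0 <= y ^+ 2 by apply: sqr_ge0.
have hx2 : 0 <= x ^+ 2 by apply: sqr_ge0.
exists (k2, k1); last by rewrite /= -hx -hy.
split.
- apply/set_mem; apply: (int_lt_bound (B := Bd)) => //.
  apply: le_trans (_ : n ^+ 2 / l ^+ 2 <= Bd); last first.
    by rewrite /Bd lerDl divr_ge0 // ?sqr_ge0 // ltW.
  rewrite ler_pdivlMr //.
  have : x ^+ 2 <= n ^+ 2 by move: hp; lra.
  by rewrite hx exprMn mulrC.
- apply/set_mem; apply: (int_lt_bound (B := Bd)) => //.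
  apply: le_trans (_ : n ^+ 2 / l ^+ 4 <= Bd); last first.
    by rewrite /Bd lerDr divr_ge0 // ?sqr_ge0 // ltW.
  rewrite ler_pdivlMr //.
  have hyn : y ^+ 2 <= n ^+ 2 by move: hp; lra.
  have : (y - n) ^+ 2 <= 4 * n ^+ 2.
    have := sqr_ge0 (y + n); lra.
  rewrite hy (_ : n + 2 * l ^+ 2 * k1%:~R - n = 2 * (l ^+ 2 * k1%:~R)); last by ring.
  rewrite exprMn (_ : l ^+ 4 = (l ^+ 2) ^+ 2); last by rewrite -exprM.
  rewrite exprMn; lra.
Qed.



Lemma Fq_eq q g g' : Fq q g = Fq q g' ->
  [/\ fA q g = fA q g', fB q g = fB q g' & fC q g = fC q g'].
Proof. by case. Qed.

Lemma Phi_Fq (R : realType) q (n : R) g g' : Fq q g = Fq q g' -> Phi R q n g = Phi R q n g'.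
Proof. by case/Fq_eq => hA hB _; rewrite /Phi hA hB. Qed.

Lemma nval_Fq (R : realType) q g g' : Fq q g = Fq q g' -> nval R q g = nval R q g'.
Proof. by case/Fq_eq => hA hB hC; rewrite /nval hA hB hC. Qed.

Lemma Fq_of_Phi (R : realType) q (n : R) g g' : q_admissible q -> det g = 1 -> det g' = 1 ->
  Phi R q n g = Phi R q n g' -> Fq q g = Fq q g'.
Proof.
move=> hq hd hd' [e1 e2].
have [hl hl2 _ _] := qfacts R hq.
have hA : fA q g = fA q g'.
  apply: (@intr_inj R); apply: (mulfI (_ : 2 * lambda_q R q ^+ 2 != 0)).
    by rewrite mulf_neq0 // expf_neq0 // gt_eqF.
  by move: e2; lra.
have hB : fB q g = fB q g'.
  have := mulfI (lt0r_neq0 hl) e1; move/intr_inj; rewrite hA; lia.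
have hC : fC q g = fC q g'.
  have := disc_q hq hd; have := disc_q hq hd'; rewrite hA hB => h1 h2.
  have hA0 : 4 * fA q g' != 0 by rewrite mulf_neq0 // gt_eqF // fA_pos.
  by apply: (mulfI hA0); lia.
by rewrite /Fq hA hB hC.
Qed.

Lemma K_Fq q h : q_admissible q -> Kset q h -> Fq q h = fz q.
Proof.
move=> hq [hP [hA hB]].
have hC : fC q h = C0 q.
  have := disc_q hq (PSL_det hP); rewrite hA hB => e.
  by move: e; rewrite -(B0C0 hq); lia.
by rewrite /Fq /fz hA hB hC.
Qed.

Definition rep (R : realType) q (n : R) (p : R * R) : quad :=
  xget (0, 0, 0, 0) [set g | Gamma_n R q n g /\ Phi R q n g = p].
Arguments rep : clear implicits.
Definition psi (R : realType) q (n : R) (x : (R * R) * quad) : quad :=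
  psln (qmul (rep R q n x.1) x.2).
Arguments psi : clear implicits.

Lemma rep_spec (R : realType) q (n : R) p : q_admissible q -> Nset R q n -> L_n R q n p ->
  Gamma_n R q n (rep R q n p) /\ Phi R q n (rep R q n p) = p.
Proof.
move=> hq hn hp; apply: (@xgetPex _ _ [set g | Gamma_n R q n g /\ Phi R q n g = p]).
by have [g [h1 [h2 h3]]] := surjL hq hn hp; exists g.
Qed.

Lemma psi_Fq (R : realType) q (n : R) x : q_admissible q -> Kset q x.2 ->
  Fq q (psi R q n x) = Fq q (rep R q n x.1).
Proof.
move=> hq hK; rewrite /psi Fq_psln Fq_mul (K_Fq hq hK).
by rewrite -Fq_fz.
Qed.

Lemma psi_bij (R : realType) q (n : R) : q_admissible q -> Nset R q n ->
  set_bij (L_n R q n `*` Kset q) (Gamma_n R q n) (psi R q n).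
Proof.
move=> hq hn; split.
- case=> p h [/= hp hK].
  have [[hrP hrn] hrPhi] := rep_spec hq hn hp.
  have hdr := PSL_det hrP.
  have hK' := hK; case: hK' => hP _.
  have hdm : det (qmul (rep R q n p) h) = 1 by rewrite det_mul hdr (PSL_det hP) mulr1.
  split; first exact: psln_PSL.
  have hdp : det (psi R q n (p, h)) = 1 by have [_ _ _ ->] := psln_f q (qmul (rep R q n p) h).
  rewrite (Rval_nval R hq hdp) (nval_Fq R (@psi_Fq R q n (p, h) hq hK)) /=.
  by rewrite -(Rval_nval R hq hdr).
- case=> p h; case=> p' h' /set_mem [/= hp hK] /set_mem [/= hp' hK'] e.
  have [[hrP hrn] hrPhi] := rep_spec hq hn hp.
  have [[hrP' hrn'] hrPhi'] := rep_spec hq hn hp'.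
  have ep : p = p'.
    have := congr1 (Phi R q n) e.
    by rewrite (Phi_Fq n (@psi_Fq R q n (p, h) hq hK)) (Phi_Fq n (@psi_Fq R q n (p', h') hq hK')) /= hrPhi hrPhi'.
  subst p'; congr (_, _).
  move: e; rewrite /psi /=; set r := rep R q n p => e.
  have hdr : det r = 1 := PSL_det hrP.
  case: hK => hP _; case: hK' => hP' _.
  have key : qmul r h = qmul r h' \/ qmul r h = negq (qmul r h').
    case: (psln_cases (qmul r h)) e => ->; case: (psln_cases (qmul r h')) => -> e.
    + by left.
    + by right.
    + by right; rewrite -e negqK.
    + by left; rewrite -[LHS]negqK e negqK.
  case: key => e2.
    by rewrite -(adj_mul h hdr) e2 adj_mul.
  rewrite -mul_neg in e2.
  have e3 : h = negq h' by rewrite -(adj_mul h hdr) e2 adj_mul.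
  by rewrite -(psln_id hP) e3 psln_neg.
- move=> g [hgP hgn].
  have hdg := PSL_det hgP.
  have hnv : nval R q g = n by rewrite -(Rval_nval R hq hdg).
  have hpL : L_n R q n (Phi R q n g) by rewrite -hnv; exact: Phi_in_L.
  have [[hrP hrn] hrPhi] := rep_spec hq hn hpL.
  set r := rep R q n (Phi R q n g) in hrP hrn hrPhi *.
  have hdr := PSL_det hrP.
  have hF : Fq q r = Fq q g := Fq_of_Phi hq hdr hdg hrPhi.
  have hdm : det (qmul (adjq r) g) = 1 by rewrite det_mul det_adj hdr hdg mulr1.
  exists (Phi R q n g, psln (qmul (adjq r) g)).
    split => //=.
    have hFh : Fq q (psln (qmul (adjq r) g)) = fz q.
      by rewrite Fq_psln Fq_mul -hF Fq_fz act_adj.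
    move: hFh; rewrite /Fq /fz; case=> hA hB _.
    by split; [exact: psln_PSL|].
  rewrite /psi /= -/r.
  case: (psln_cases (qmul (adjq r) g)) => ->.
    by rewrite mul_adj // psln_id.
  by rewrite mul_neg mul_adj // psln_neg.
Qed.



Lemma arg_scale (R : realType) (v : R * R) (k : R) I : 0 < k ->
  arg_in R (k * v.1, k * v.2) I <-> arg_in R v I.
Proof.
move=> hk; case: v => v1 v2 /=; rewrite /arg_in /=.
have hs : Num.sqrt ((k * v1) ^+ 2 + (k * v2) ^+ 2) = k * Num.sqrt (v1 ^+ 2 + v2 ^+ 2).
  rewrite (_ : (k * v1) ^+ 2 + (k * v2) ^+ 2 = k ^+ 2 * (v1 ^+ 2 + v2 ^+ 2)); last by ring.
  by rewrite sqrtrM ?sqr_ge0 // sqrtr_sqr gtr0_norm.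
rewrite hs; have hk0 : k != 0 by rewrite gt_eqF.
split; case=> t ht e; exists t => //.
  case: e => e1 e2; congr (_, _); apply: (mulfI hk0).
    by rewrite e1 mulrA.
  by rewrite e2 mulrA.
move/pair_equal_spec: e => [e1 e2]; congr (_, _).
  by rewrite {1}e1 mulrA.
by rewrite {1}e2 mulrA.
Qed.

Definition kK (R : realType) q : R := \sum_(h \in Kset q) (1 : R).
Arguments kK : clear implicits.

Lemma kK_gt0 (R : realType) q : q_admissible q -> 0 < kK R q.
Proof.
move=> hq; have hK : Kset q (1, 0, 0, 1).
  split; first by split => //; right.
  by rewrite /fA /fB /=; split; ring.
rewrite /kK (fsbigD1 (1, 0, 0, 1)) //; last exact: finite_K.
by rewrite ltr_pwDl // fsumr_ge0.
Qed.

Lemma sum_Gam (R : realType) q (n : R) (F : R * R -> R) : q_admissible q -> Nset R q n ->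
  \sum_(g \in Gamma_n R q n) F (Phi R q n g) = (\sum_(p \in L_n R q n) F p) * kK R q.
Proof.
move=> hq hn.
rewrite (@reindex_fsbig _ _ _ _ _ (psi R q n) _ _ _ (psi_bij hq hn)).
rewrite (eq_fsbigr (fun x => F x.1)); last first.
  case=> p h /set_mem [/= hp hK].
  rewrite (Phi_Fq n (@psi_Fq R q n (p, h) hq hK)) /=.
  by have [_ ->] := rep_spec hq hn hp.
transitivity (\sum_(p \in L_n R q n) \sum_(h \in Kset q) F p).
  by rewrite pair_fsbig //; [exact: finite_L|exact: finite_K].
rewrite mulr_fsuml; apply: eq_fsbigr => p _.
by rewrite /kK mulr_fsumr; apply: eq_fsbigr => h _; rewrite mulr1.
Qed.

Lemma disc_eq (R : realType) q (n : R) I : q_admissible q -> Nset R q n ->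
  disc_Gamma R q n I = disc_L R q n I.
Proof.
move=> hq hn; rewrite /disc_Gamma /disc_L.
have e1 : \sum_(g \in Gamma_n R q n) ((`[< arg_in R (theta_dir R q g) I >])%:R : R) =
    \sum_(g \in Gamma_n R q n) (fun p => ((`[< arg_in R p I >])%:R : R)) (Phi R q n g).
  apply: eq_fsbigr => g /set_mem [hgP hgn] /=.
  have hdg := PSL_det hgP.
  have hnv : nval R q g = n by rewrite -(Rval_nval R hq hdg).
  rewrite -hnv (theta_Phi R hq hdg).
  have hA : 0 < (fA q g)%:~R :> R by rewrite ltr0z fA_pos.
  by rewrite (asbool_equiv_eq (arg_scale _ _ hA)).
have e0 := sum_Gam (fun=> (1 : R)) hq hn.
have E1 := etrans e1 (sum_Gam (fun p => ((`[< arg_in R p I >])%:R : R)) hq hn).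
rewrite E1 e0 -mulf_div divff ?mulr1 //.
by rewrite gt_eqF // kK_gt0.
Qed.


Unset Implicit Arguments.

Theorem corollary2p7 (R : realType) (q : nat) (n : R) :
  q_admissible q -> Nset R q n -> n != 2 * lambda_q R q ^+ 2 ->
  sup [set disc_Gamma R q n I | I in arc_param R] =
  sup [set disc_L R q n I | I in arc_param R].
Proof.
move=> hq hn _.
rewrite (_ : disc_Gamma R q n = disc_L R q n) //.
by apply: funext => I; exact: disc_eq.
Qed.
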